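(* Let $R$ be a relation with $n$ tuples over attributes $F_1\cup F_2$, where $J=F_1\cap F_2$ is a categorical join key with domain of size $d\ge 2$ such that each value of $J$ appears exactly $n/d$ times in $R$, and the numerical feature values of the tuples of $R$ are independent random vectors with a common distribution, not correlated with $J$. Let $R_{\Join}=\pi_{F_1}(R)\Join_J\pi_{F_2}(R)$ (projections keep duplicates, so each projection has $n$ tuples), and let $s'=\gamma(R_{\Join})$, i.e. $s'[c]=|R_{\Join}|$ and $s'[p]=\sum_{t\in R_{\Join}}p(t)$ for every monomial $p$. Define, for features $f_1\in F_1\setminus J$, $f_2\in F_2\setminus J$, $$\hat s[f_1f_2]=\frac{1-n}{1-d}\frac{s'[f_1f_2]}{s'[c]}+\frac{n-d}{1-d}\frac{s'[f_1]}{s'[c]}\frac{s'[f_2]}{s'[c]},$$ and $\hat s[p]=s'[p]/s'[c]$ for every other monomial $p$ of order $1$ or $2$ in the features of $(F_1\cup F_2)\setminus J$. Then for every monomial $p$ of order $1$ or $2$ in these features, $\mathbb E[\hat s[p]]=\mathbb E[p]$, where $\mathbb E[p]$ is the expected value of $p$ under the common distribution of the tuples' feature values; i.e. $\hat s$ is an unbiased estimator of the (normalized) monomial statistics of $\pi_{F_1\cup F_2}(R)$.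
   Context: Monomials of order 1 are single features $f$; monomials of order 2 are products $f_1f_2$ of two (possibly equal) features. The join $\Join_J$ is the natural (bag) join on $J$, producing for each value of $J$ the Cartesian product of matching tuples. *)

(* Defs.v *)
From HB Require Import structures.
From mathcomp Require Import all_boot all_order all_algebra.
From mathcomp Require Import all_classical all_reals.
From mathcomp Require Import ereal measure lebesgue_measure lebesgue_integral probability.
Set Implicit Arguments. Unset Strict Implicit. Unset Printing Implicit Defensive.
Import Order.TTheory GRing.Theory Num.Theory.
Local Open Scope classical_set_scope.
Local Open Scope ring_scope.

(* Features: A = F1 \ J, B = F2 \ J; the numerical features of a tuple of R
   (i.e. of (F1 u F2) \ J) are indexed by the sum type A + B. *)

Inductive monomial (A B : finType) : Type :=
| mono1 of (A + B)%type
| mono2 of (A + B)%type & (A + B)%type.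
Arguments mono1 {A B}.
Arguments mono2 {A B}.

Definition eval_mono (R : realType) (A B : finType) (p : monomial A B)
  (t : (A + B)%type -> R) : R :=
  match p with
  | mono1 f => t f
  | mono2 f g => t f * t g
  end.

(* Tuple of the join pi_F1(R) |x|_J pi_F2(R) built from the F1-part of tuple i
   and the F2-part of tuple j of R (outcome w). *)
Definition join_tuple (d0 : measure_display) (T : measurableType d0)
  (R : realType) (A B : finType) (n : nat)
  (X : 'I_n -> (A + B)%type -> T -> R) (i j : 'I_n) (w : T) :
  (A + B)%type -> R :=
  fun f => match f with inl a => X i (inl a) w | inr b => X j (inr b) w end.

(* s'[c] = |R_join|: pairs (i, j) of tuples of R with equal join key *)
Definition sjoin_c (R : realType) (n d : nat) (J : 'I_n -> 'I_d) : R :=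
  (\sum_(i < n) \sum_(j < n | J i == J j) 1)%R.

Definition sjoin (d0 : measure_display) (T : measurableType d0)
  (R : realType) (A B : finType) (n d : nat) (J : 'I_n -> 'I_d)
  (X : 'I_n -> (A + B)%type -> T -> R) (p : monomial A B) (w : T) : R :=
  \sum_(i < n) \sum_(j < n | J i == J j) eval_mono p (join_tuple X i j w).

Definition shat_cross (d0 : measure_display) (T : measurableType d0)
  (R : realType) (A B : finType) (n d : nat) (J : 'I_n -> 'I_d)
  (X : 'I_n -> (A + B)%type -> T -> R) (a : A) (b : B) (w : T) : R :=
  let c := sjoin_c R J in
  (1 - n%:R) / (1 - d%:R) * (sjoin J X (mono2 (inl a) (inr b)) w / c)
  + (n%:R - d%:R) / (1 - d%:R)
    * (sjoin J X (mono1 (inl a)) w / c) * (sjoin J X (mono1 (inr b)) w / c).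

Definition shat (d0 : measure_display) (T : measurableType d0)
  (R : realType) (A B : finType) (n d : nat) (J : 'I_n -> 'I_d)
  (X : 'I_n -> (A + B)%type -> T -> R) (p : monomial A B) (w : T) : R :=
  match p with
  | mono2 (inl a) (inr b) => shat_cross J X a b w
  | mono2 (inr b) (inl a) => shat_cross J X a b w
  | _ => sjoin J X p w / sjoin_c R J
  end.

(* Since S i f may be setT, this covers every
   finite subfamily. *)
Definition independent_vectors (d0 : measure_display) (T : measurableType d0)
  (R : realType) (P : probability T R) (F : finType) (n : nat)
  (X : 'I_n -> F -> T -> R) : Prop :=
  forall S : 'I_n -> F -> set R, (forall i f, measurable (S i f)) ->
    P (\bigcap_(i in [set: 'I_n]) \bigcap_(f in [set: F]) (X i f @^-1` S i f))
    = (\prod_(i < n) P (\bigcap_(f in [set: F]) (X i f @^-1` S i f)))%E.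

Definition identically_distributed (d0 : measure_display)
  (T : measurableType d0) (R : realType) (P : probability T R) (F : finType)
  (n : nat) (X : 'I_n -> F -> T -> R) : Prop :=
  forall (i j : 'I_n) (S : F -> set R), (forall f, measurable (S f)) ->
    P (\bigcap_(f in [set: F]) (X i f @^-1` S f))
    = P (\bigcap_(f in [set: F]) (X j f @^-1` S f)).

(* Main.v *)
Require Import Defs.
From HB Require Import structures.
From mathcomp Require Import all_boot all_order all_algebra.
From mathcomp Require Import all_classical all_reals.
From mathcomp Require Import ereal measure lebesgue_measure lebesgue_integral probability.
From mathcomp Require Import measurable_realfun lebesgue_integral_fubini hoelder exp.
From mathcomp Require Import ring.
Set Implicit Arguments. Unset Strict Implicit. Unset Printing Implicit Defensive.
Import Order.TTheory GRing.Theory Num.Theory.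
Local Open Scope classical_set_scope.
Local Open Scope ring_scope.
Section Indep.
Local Open Scope ereal_scope.
Context d (T : measurableType d) (R : realType) (P : probability T R).

Definition pairf (U V : T -> R) : T -> R * R := fun w => (U w, V w).
Lemma pairf_mfun (U V : {mfun T >-> R}) : measurable_fun setT (pairf U V).
Proof. exact: measurable_fun_pair. Qed.
HB.instance Definition _ (U V : {mfun T >-> R}) :=
  isMeasurableFun.Build _ _ _ _ (pairf U V) (pairf_mfun U V).

Lemma pair_law_eq (U V U' V' : {mfun T >-> R}) :
 (forall A B, measurable A -> measurable B ->
    P (U @^-1` A `&` V @^-1` B) = P (U' @^-1` A `&` V' @^-1` B)) ->
 forall C, measurable C ->
   distribution P (pairf U V) C = distribution P (pairf U' V') C.
Proof.
move=> HUV C mC.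
pose G := [set A `*` B | A in (@measurable _ R) & B in (@measurable _ R)].
apply: (@measure_unique _ _ _ G (fun=> setT)) => //.
- by rewrite measurable_prod_measurableType.
- move=> _ _ [A1 mA1 [B1 mB1 <-]] [A2 mA2 [B2 mB2 <-]].
  rewrite -setXI; exists (A1 `&` A2); first exact: measurableI.
  by exists (B1 `&` B2) => //; exact: measurableI.
- by move=> _; exists setT => //; exists setT => //; rewrite setXTT.
- by rewrite bigcup_const.
- move=> _ [A mA [B mB <-]]; exact: HUV.
- by move=> k /=; rewrite probability_setT ltry.
Qed.

Lemma E_pair (U V U' V' : {mfun T >-> R}) (h : R * R -> R) :
  measurable_fun setT h ->
  P.-integrable setT (EFin \o (h \o pairf U V)) ->
  P.-integrable setT (EFin \o (h \o pairf U' V')) ->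
  (forall A B, measurable A -> measurable B ->
    P (U @^-1` A `&` V @^-1` B) = P (U' @^-1` A `&` V' @^-1` B)) ->
  'E_P[h \o pairf U V] = 'E_P[h \o pairf U' V'].
Proof.
move=> mh i1 i2 HL; rewrite unlock.
have mh' : measurable_fun setT (EFin \o h) by exact/measurable_EFinP.
transitivity (\int[distribution P (pairf U V)]_y (EFin \o h) y).
  by rewrite (integral_distribution (X:=pairf U V)).
transitivity (\int[distribution P (pairf U' V')]_y (EFin \o h) y); last first.
  by rewrite (integral_distribution (X:=pairf U' V')).
apply: eq_measure_integral => C mC _; exact: pair_law_eq.
Qed.

Lemma E_indep (U V : {mfun T >-> R}) :
  (forall A B, measurable A -> measurable B ->
    P (U @^-1` A `&` V @^-1` B) = P (U @^-1` A) * P (V @^-1` B)) ->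
  P.-integrable setT (EFin \o U) -> P.-integrable setT (EFin \o V) ->
  P.-integrable setT (EFin \o (U \* V)%R) ->
  'E_P[(U \* V)%R] = 'E_P[U] * 'E_P[V].
Proof.
move=> HI iU iV iUV.
pose mu := distribution P (pairf U V).
pose m1 := distribution P U.
pose m2 := distribution P V.
pose h := fun z : R * R => (z.1 * z.2)%R.
have mh : measurable_fun setT h.
  by apply: measurable_funM; [exact: measurable_fst|exact: measurable_snd].
have mh' : measurable_fun setT (EFin \o h) by exact/measurable_EFinP.
have Hm : forall C, measurable C -> (m1 \x m2) C = mu C.
  apply: product_measure_unique => A B mA mB.
  exact: HI.
have imu : mu.-integrable setT (EFin \o h).
  exact: (integrable_pushforward (phi:=pairf U V)).
have iprod : (m1 \x m2).-integrable setT (EFin \o h).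
  apply/integrableP; split => //.
  rewrite (eq_measure_integral mu); last by move=> C mC _; exact: Hm.
  by case/integrableP: imu.
have i1 : m1.-integrable setT EFin.
  by apply: integrable_pushforward => //; exact/measurable_EFinP.
have i2 : m2.-integrable setT EFin.
  by apply: integrable_pushforward => //; exact/measurable_EFinP.
rewrite unlock.
transitivity (\int[mu]_y (EFin \o h) y).
  by rewrite (integral_distribution (X:=pairf U V)).
rewrite -(eq_measure_integral _ (m1:=m1 \x m2)); last by move=> C mC _; exact: Hm.
rewrite -integral12_prod_meas1 //.
have Ev : \int[m2]_y (y%:E) = 'E_P[V].
  by rewrite unlock (integral_distribution (X:=V) (f:=EFin)).
have Eu : \int[m1]_y (y%:E) = 'E_P[U].
  by rewrite unlock (integral_distribution (X:=U) (f:=EFin)).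
have fV : 'E_P[V] \is a fin_num.
  by rewrite unlock; exact: integrable_fin_num.
transitivity (\int[m1]_x ((x%:E) * (fine 'E_P[V])%:E)).
  apply: eq_integral => x _ /=.
  rewrite /fubini_F /=; under eq_integral do rewrite EFinM.
  by rewrite (integralZl measurableT i2) Ev fineK.
rewrite integralZr // Eu fineK //.
by rewrite unlock.
Qed.
End Indep.
Section Aux.
Local Open Scope ereal_scope.
Context d (T : measurableType d) (R : realType) (P : probability T R).

Lemma Lfun2_of_sqr (U : {mfun T >-> R}) :
  P.-integrable setT (fun w => ((U w) ^+ 2)%:E) -> (U : T -> R) \in Lfun P 2%:E.
Proof.
move=> iU; apply/andP; split.
  by rewrite inE; exact: measurable_funPT.
rewrite inE /= /finite_norm.
apply: (@lty_poweRy _ _ 2) => //.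
rewrite poweR_Lnorm //.
rewrite (eq_integral (fun w => `|((U w) ^+ 2)%:E|)); last first.
  by move=> x _ /=; rewrite powR_mulrn // normrX.
by case/integrableP: iU.
Qed.

Lemma E_fin (Z : T -> R) : Z \in Lfun P 1 -> 'E_P[Z] = (fine 'E_P[Z])%:E.
Proof. by move=> h; rewrite fineK // expectation_fin_num. Qed.

Lemma Lfun_sum (I : Type) (r : seq I) (Pr : pred I) (F : I -> T -> R) :
  (forall i, Pr i -> F i \in Lfun P 1) ->
  (fun w => \sum_(i <- r | Pr i) F i w)%R \in Lfun P 1.
Proof.
move=> HF; elim: r => [|i r IH].
  under eq_fun do rewrite big_nil.
  exact: Lfun_cst.
under eq_fun do rewrite big_cons.
case: (boolP (Pr i)) => Pi; last by [].
exact: (rpredD (HF i Pi) IH).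
Qed.

Lemma E_sum (I : Type) (r : seq I) (Pr : pred I) (F : I -> T -> R) :
  (forall i, Pr i -> F i \in Lfun P 1) ->
  fine 'E_P[fun w => (\sum_(i <- r | Pr i) F i w)%R] = (\sum_(i <- r | Pr i) fine 'E_P[F i])%R.
Proof.
move=> HF; elim: r => [|i r IH].
  under eq_fun do rewrite big_nil.
  by rewrite big_nil expectation_cst.
under eq_fun do rewrite big_cons.
rewrite big_cons; case: (boolP (Pr i)) => Pi; last by [].
have L := Lfun_sum r HF.
rewrite (expectationD (HF i Pi) L) fineD ?expectation_fin_num //; last exact: HF.
by rewrite IH.
Qed.

Lemma E_scale (Z : T -> R) (k : R) : Z \in Lfun P 1 ->
  fine 'E_P[fun w => k * Z w]%R = (k * fine 'E_P[Z])%R.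
Proof.
move=> h; have E : (fun w => k * Z w)%R = (k \o* Z)%R :> (T -> R) by apply/funext => w /=; rewrite mulrC.
rewrite E.

by rewrite expectationZl // fineM // expectation_fin_num.
Qed.

End Aux.
Section Aux2.
Local Open Scope ereal_scope.
Context d (T : measurableType d) (R : realType) (P : probability T R).

Lemma bigcap_two (F : finType) (Z : F -> T -> R) (f g : F) (A0 B0 : set R) :
  \bigcap_(h in [set: F]) (Z h @^-1` ((if h == f then A0 else setT) `&`
                                     (if h == g then B0 else setT)))
  = Z f @^-1` A0 `&` Z g @^-1` B0.
Proof.
apply/seteqP; split => w.
  move=> H; split.
    by have := H f I; rewrite /= eqxx => -[].
  by have := H g I; rewrite /= eqxx => -[].
move=> [wa wb] h _ /=; split.
  by case: eqP => [->|].
by case: eqP => [->|].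
Qed.

Lemma Lfun_scale1 (Z : T -> R) (k : R) : Z \in Lfun P 1 ->
  (fun w => k * Z w)%R \in Lfun P 1.
Proof.
move=> h; have E : (fun w => k * Z w)%R = (k \o* Z)%R :> (T -> R).
  by apply/funext => w /=; rewrite mulrC.
by rewrite E; apply: Lfun_scale.
Qed.

Lemma Lfun_dsum (n : nat) (Q : 'I_n -> 'I_n -> bool) (F : 'I_n -> 'I_n -> T -> R) :
  (forall i j, F i j \in Lfun P 1) ->
  (fun w => \sum_(i < n) \sum_(j < n | Q i j) F i j w)%R \in Lfun P 1.
Proof.
move=> HF; apply: Lfun_sum => i _.
by apply: Lfun_sum => j _.
Qed.

Lemma E_dsum (n : nat) (Q : 'I_n -> 'I_n -> bool) (F : 'I_n -> 'I_n -> T -> R) :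
  (forall i j, F i j \in Lfun P 1) ->
  fine 'E_P[fun w => \sum_(i < n) \sum_(j < n | Q i j) F i j w]%R
  = (\sum_(i < n) \sum_(j < n | Q i j) fine 'E_P[F i j])%R.
Proof.
move=> HF; rewrite E_sum; last by move=> i _; apply: Lfun_sum.
by apply: eq_bigr => i _; rewrite E_sum.
Qed.

End Aux2.

Section Main.
Local Open Scope ereal_scope.
Context (d0 : measure_display) (T : measurableType d0)
  (R : realType) (P : probability T R) (A B : finType) (n d : nat)
  (J : 'I_n -> 'I_d) (X : 'I_n -> (A + B)%type -> {RV P >-> R}).
Context (n0 : (0 < n)%N) (d2 : (2 <= d)%N)
  (HJ : forall k : 'I_d, (#|[set i | J i == k]| * d)%N = n)
  (Hind : independent_vectors P (fun i f => (X i f : T -> R)))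
  (Hid : identically_distributed P (fun i f => (X i f : T -> R)))
  (Hsq : forall i f, P.-integrable setT (fun w => ((X i f w) ^+ 2)%:E)).
Context (i0 : 'I_n).

Let L2 i f : (X i f : T -> R) \in Lfun P 2%:E := Lfun2_of_sqr (Hsq i f).

Let L1 i f : (X i f : T -> R) \in Lfun P 1.
Proof. apply: Lfun_subset12 (L2 i f); exact: fin_num_measure. Qed.

Let LM i f j g : (X i f \* X j g)%R \in Lfun P 1.
Proof. exact: Lfun2_mul_Lfun1. Qed.

Let I1 i f : P.-integrable setT (EFin \o X i f).
Proof. exact/Lfun1_integrable. Qed.

Let IM i f j g : P.-integrable setT (EFin \o (X i f \* X j g)%R).
Proof. exact/Lfun1_integrable. Qed.

Let mS (b : bool) (A0 : set R) : measurable A0 -> measurable (if b then A0 else setT).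
Proof. by case: b. Qed.

Let law_id i f g (A0 B0 : set R) : measurable A0 -> measurable B0 ->
  P (X i f @^-1` A0 `&` X i g @^-1` B0) = P (X i0 f @^-1` A0 `&` X i0 g @^-1` B0).
Proof.
move=> mA mB.
have := Hid i i0 (S := fun h => (if h == f then A0 else setT) `&`
                                (if h == g then B0 else setT)).
rewrite !bigcap_two; apply => h; apply: measurableI; exact: mS.
Qed.

Let h1 i f : 'E_P[X i f] = 'E_P[X i0 f].
Proof.
exact: (E_pair (U := X i f) (V := X i f) (U' := X i0 f) (V' := X i0 f)
          (h := fst) measurable_fst (I1 i f) (I1 i0 f) (law_id i f f)).
Qed.

Let h2 i f g : 'E_P[(X i f \* X i g)%R] = 'E_P[(X i0 f \* X i0 g)%R].
Proof.
have mh : measurable_fun setT (fun z : R * R => z.1 * z.2)%R.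
  by apply: measurable_funM; [exact: measurable_fst|exact: measurable_snd].
exact: (E_pair (U := X i f) (V := X i g) (U' := X i0 f) (V' := X i0 g)
          mh (IM i f i g) (IM i0 f i0 g) (law_id i f g)).
Qed.


Let h3 i j f g : i != j ->
  'E_P[(X i f \* X j g)%R] = 'E_P[X i f] * 'E_P[X j g].
Proof.
move=> ij; apply: E_indep; [|exact: I1|exact: I1|exact: IM].
move=> A0 B0 mA mB.
pose S k h := (if h == f then (if k == i then A0 else setT) else setT) `&`
              (if h == g then (if k == j then B0 else setT) else setT).
have := Hind (S := S).
have mS' : forall k h, measurable (S k h).
  by move=> k h; apply: measurableI; apply: mS; apply: mS.
move/(_ mS').
have E k : \bigcap_(h in [set: (A + B)%type]) ((X k h : T -> R) @^-1` S k h)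
    = X k f @^-1` (if k == i then A0 else setT) `&`
      X k g @^-1` (if k == j then B0 else setT).
  exact: (bigcap_two (fun h => (X k h : T -> R))).
rewrite (eq_bigcapr (fun k _ => E k)).
under eq_bigr do rewrite E.
have -> : \bigcap_(k in [set: 'I_n]) (X k f @^-1` (if k == i then A0 else setT) `&`
      X k g @^-1` (if k == j then B0 else setT))
    = X i f @^-1` A0 `&` X j g @^-1` B0.
  apply/seteqP; split => w.
    move=> H; split.
      by have := H i I; rewrite /= eqxx => -[].
    by have := H j I; rewrite /= eqxx => -[].
  move=> [wa wb] k _ /=; split.
    by case: eqP => [->|].
  by case: eqP => [->|].
move=> ->.
rewrite (bigD1 i) //= (bigD1 j) /=; last by rewrite eq_sym.
rewrite big1 ?mule1; last first.
  move=> k /andP[ki kj].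
  by rewrite (negbTE ki) (negbTE kj) !preimage_setT setIT probability_setT.
rewrite eqxx (negbTE ij) eq_sym (negbTE ij) eqxx.
by rewrite !preimage_setT setIT setTI.
Qed.


Let Y := fun i f => (X i f : T -> R).
Let mu f := fine 'E_P[X i0 f].
Let e2 f g := fine 'E_P[(X i0 f \* X i0 g)%R].

Let eY i f : fine 'E_P[X i f] = mu f.
Proof. by rewrite h1. Qed.

Let eYY i j f g : fine 'E_P[(X i f \* X j g)%R]
  = (mu f * mu g + (i == j)%:R * (e2 f g - mu f * mu g))%R.
Proof.
case: (eqVneq i j) => [<-|ij].
  by rewrite /e2 h2 mul1r addrC subrK.
rewrite h3 // fineM ?expectation_fin_num // !eY.
by rewrite mul0r addr0.
Qed.

Let m := (n %/ d)%N.
Let dpos : (0 < d)%N. Proof. exact: leq_trans d2. Qed.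
Let cardJ k : #|[set j | J j == k]| = m.
Proof. by rewrite /m -[in RHS](HJ k) mulnK. Qed.
Let nmd : n = (m * d)%N.
Proof. by rewrite -[in LHS](HJ (J i0)) cardJ. Qed.
Let mpos : (0 < m)%N.
Proof. by move: n0; rewrite nmd muln_gt0 => /andP[]. Qed.

Let S1 i (x : R) : (\sum_(j < n | J i == J j) x = m%:R * x)%R.
Proof.
transitivity (\sum_(j in [set j | J j == J i]) x)%R.
  apply: eq_bigl => j /=. apply/idP/idP => [/eqP Eij|/set_mem /= /eqP ->//].
  by apply: mem_set => /=; rewrite Eij.
by rewrite sumr_const cardJ mulr_natl.
Qed.

Let S2 i (y : R) : (\sum_(j < n | J i == J j) ((i == j)%:R * y) = y)%R.
Proof.
rewrite (bigD1 i) ?eqxx //= mul1r big1 ?addr0 // => j /andP[_ ji].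
by rewrite eq_sym (negbTE ji) mul0r.
Qed.

Let S3 i (y : R) :
  (\sum_(k < n) \sum_(l < n | J k == J l) ((i == l)%:R * y) = m%:R * y)%R.
Proof.
transitivity (\sum_(k < n | J i == J k) y)%R; last exact: S1.
rewrite [RHS]big_mkcond /=; apply: eq_bigr => k _.
case: eqP => [Eik|Nik].
  rewrite (bigD1 i) ?eqxx /=; last by rewrite Eik.
  rewrite mul1r big1 ?addr0 // => l /andP[_ li].
  by rewrite eq_sym (negbTE li) mul0r.
rewrite big1 // => l /eqP Ekl.
case: eqP => [il|]; last by rewrite mul0r.
by exfalso; apply: Nik; rewrite il Ekl.
Qed.

Let cE : sjoin_c R J = (n * m)%:R.
Proof.
rewrite /sjoin_c; under eq_bigr do rewrite S1 mulr1.
by rewrite sumr_const card_ord natrM mulr_natl.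
Qed.

Let c_neq0 : sjoin_c R J != 0%R.
Proof. by rewrite cE pnatr_eq0 -lt0n muln_gt0 n0 mpos. Qed.


Let nc (p : monomial A B) (v : R) :
  (forall i j, (fun w => eval_mono p (join_tuple Y i j w)) \in Lfun P 1) ->
  (forall i j, J i == J j ->
     fine 'E_P[fun w => eval_mono p (join_tuple Y i j w)] = v) ->
  'E_P[fun w => sjoin J Y p w / sjoin_c R J]%R = v%:E.
Proof.
move=> HL Hv.
have E1 : (fun w => sjoin J Y p w / sjoin_c R J)%R =
  (fun w => (sjoin_c R J)^-1 * (\sum_(i < n) \sum_(j < n | J i == J j)
      (fun i j w => eval_mono p (join_tuple Y i j w)) i j w))%R.
  by apply/funext => w; rewrite mulrC.
have LD := Lfun_dsum (fun i j => J i == J j) HL.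
rewrite E1 E_fin; last exact: Lfun_scale1.
rewrite E_scale // E_dsum //.
congr EFin.
under eq_bigr => i _ do under eq_bigr => j Hij do rewrite Hv //.
under eq_bigr do rewrite S1.
rewrite sumr_const card_ord cE natrM -mulr_natl.
have nn : (n%:R : R) != 0%R by rewrite pnatr_eq0 -lt0n.
have mm : (m%:R : R) != 0%R by rewrite pnatr_eq0 -lt0n.
by field; rewrite nn mm.
Qed.


Let cross (a : A) (b : B) :
  'E_P[shat_cross J Y a b] = 'E_P[(X i0 (inl a) \* X i0 (inr b))%R].
Proof.
pose c := sjoin_c R J.
pose al : R := ((1 - n%:R) / (1 - d%:R))%R.
pose be : R := ((n%:R - d%:R) / (1 - d%:R))%R.
pose F2 := fun i j w => (Y i (inl a) w * Y j (inr b) w)%R.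
pose Q := fun (i j : 'I_n) w => (\sum_(k < n) \sum_(l < n | J k == J l) F2 i l w)%R.
have LF2 : forall i j, F2 i j \in Lfun P 1 := fun i j => LM i (inl a) j (inr b).
have LS := Lfun_dsum (fun i j => J i == J j) LF2.
have LQ : forall i j, Q i j \in Lfun P 1 :=
  fun i j => Lfun_dsum (fun k l => J k == J l) (fun k l => LF2 i l).
have LQ' := Lfun_dsum (fun i j => J i == J j) LQ.
have nn : (n%:R : R) != 0%R by rewrite pnatr_eq0 -lt0n.
have mm : (m%:R : R) != 0%R by rewrite pnatr_eq0 -lt0n.
have dd : (d%:R : R) != 0%R by rewrite pnatr_eq0 -lt0n.
have d1 : ((1 - d%:R)%R : R) != 0%R.
  by rewrite subr_eq0 eq_sym pnatr_eq1; case: d d2 => [|[|]].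
have cc : c != 0%R by exact: c_neq0.
have E1 : shat_cross J Y a b = (fun w =>
   (al / c) * (\sum_(i < n) \sum_(j < n | J i == J j) F2 i j w)
   + (be / c ^+ 2) * (\sum_(i < n) \sum_(j < n | J i == J j) Q i j w))%R.
  apply/funext => w; rewrite /shat_cross /sjoin /= -/c.
  have -> : (\sum_(i < n) \sum_(j < n | J i == J j) Q i j w)%R =
    ((\sum_(i < n) \sum_(j < n | J i == J j) Y i (inl a) w) *
     (\sum_(i < n) \sum_(j < n | J i == J j) Y j (inr b) w))%R.
    rewrite mulr_suml; apply: eq_bigr => i _; rewrite mulr_suml.
    apply: eq_bigr => j _; rewrite /Q mulr_sumr; apply: eq_bigr => k _.
    by rewrite mulr_sumr.
  rewrite /F2 /al /be /=; field; by rewrite ?d1 ?cc.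
have Lall : (fun w =>
   (al / c) * (\sum_(i < n) \sum_(j < n | J i == J j) F2 i j w)
   + (be / c ^+ 2) * (\sum_(i < n) \sum_(j < n | J i == J j) Q i j w))%R \in Lfun P 1.
  by apply: (rpredD (Lfun_scale1 (al / c) LS) (Lfun_scale1 (be / c ^+ 2) LQ')).
rewrite E1 (E_fin Lall) (E_fin (LM i0 (inl a) i0 (inr b))); congr EFin.
rewrite (expectationD (Lfun_scale1 (al / c) LS) (Lfun_scale1 (be / c ^+ 2) LQ')).
rewrite fineD ?expectation_fin_num ?Lfun_scale1 // !E_scale //.
set muab := (mu (inl a) * mu (inr b))%R.
set dl := (e2 (inl a) (inr b) - muab)%R.
have ES : fine 'E_P[fun w => \sum_(i < n) \sum_(j < n | J i == J j) F2 i j w]%R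
    = (n%:R * (m%:R * muab + dl))%R.
  rewrite E_dsum //.
  transitivity (\sum_(i < n) \sum_(j < n | J i == J j) (muab + (i == j)%:R * dl))%R.
    by apply: eq_bigr => i _; apply: eq_bigr => j _; exact: eYY.
  under eq_bigr do rewrite big_split /= S1 S2.
  by rewrite sumr_const card_ord [RHS]mulr_natl.
have EQ : fine 'E_P[fun w => \sum_(i < n) \sum_(j < n | J i == J j) Q i j w]%R
    = (n%:R * m%:R * (n%:R * m%:R * muab + m%:R * dl))%R.
  rewrite E_dsum //.
  transitivity (\sum_(i < n) \sum_(j < n | J i == J j)
                 (n%:R * m%:R * muab + m%:R * dl))%R; last first.
    under eq_bigr do rewrite S1.
    by rewrite sumr_const card_ord -[RHS]mulrA [RHS]mulr_natl.
  apply: eq_bigr => i _; apply: eq_bigr => j _.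
  rewrite /Q E_dsum; last by move=> k l; exact: LF2.
  transitivity (\sum_(k < n) \sum_(l < n | J k == J l) (muab + (i == l)%:R * dl))%R.
    by apply: eq_bigr => k _; apply: eq_bigr => l _; exact: eYY.
  under eq_bigr do rewrite big_split /=.
  rewrite big_split /= S3.
  under eq_bigr do rewrite S1.
  by rewrite sumr_const card_ord; congr (_ + _)%R; rewrite -mulrA [RHS]mulr_natl.
rewrite ES EQ /c cE natrM.
have -> : fine 'E_P[(X i0 (inl a) \* X i0 (inr b))%R] = (muab + dl)%R by rewrite /dl addrC subrK.
have nR : (n%:R : R) = (m%:R * d%:R)%R by rewrite [in LHS]nmd natrM.
rewrite /al /be nR.
by field; rewrite mm dd d1.
Qed.


Lemma main_sec (p : monomial A B) :
  'E_P[shat J Y p] = 'E_P[fun w => eval_mono p (fun f => X i0 f w)].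
Proof.
case: p => [[a|b]|[a|b] [a'|b']].
- rewrite /shat (nc (v := mu (inl a))).
  + by rewrite (E_fin (L1 i0 (inl a))).
  + by move=> i1 j1; exact: L1 i1 (inl a).
  + by move=> i1 j1 _; exact: eY i1 (inl a).
- rewrite /shat (nc (v := mu (inr b))).
  + by rewrite (E_fin (L1 i0 (inr b))).
  + by move=> i1 j1; exact: L1 j1 (inr b).
  + by move=> i1 j1 _; exact: eY j1 (inr b).
- rewrite /shat (nc (v := e2 (inl a) (inl a'))).
  + by rewrite (E_fin (LM i0 (inl a) i0 (inl a'))).
  + by move=> i1 j1; exact: (LM i1 (inl a) i1 (inl a')).
  + move=> i1 j1 _; rewrite /= (eYY i1 i1 (inl a) (inl a')).
    by rewrite eqxx mul1r addrC subrK.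
- exact: cross.
- have -> : (fun w => eval_mono (mono2 (inr b) (inl a')) (fun f => X i0 f w))
      = (X i0 (inl a') \* X i0 (inr b))%R.
    by apply/funext => w /=; rewrite mulrC.
  exact: cross.
- rewrite /shat (nc (v := e2 (inr b) (inr b'))).
  + by rewrite (E_fin (LM i0 (inr b) i0 (inr b'))).
  + by move=> i1 j1; exact: (LM j1 (inr b) j1 (inr b')).
  + move=> i1 j1 _; rewrite /= (eYY j1 j1 (inr b) (inr b')).
    by rewrite eqxx mul1r addrC subrK.
Qed.

End Main.

Unset Implicit Arguments.
Theorem proposition2 (d0 : measure_display) (T : measurableType d0)
  (R : realType) (P : probability T R) (A B : finType) (n d : nat)
  (J : 'I_n -> 'I_d) (X : 'I_n -> (A + B)%type -> {RV P >-> R}) :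
  (0 < n)%N -> (2 <= d)%N ->
  (forall k : 'I_d, (#|[set i | J i == k]| * d)%N = n) ->
  independent_vectors P (fun i f => (X i f : T -> R)) ->
  identically_distributed P (fun i f => (X i f : T -> R)) ->
  (forall i f, P.-integrable setT (fun w => ((X i f w) ^+ 2)%:E)) ->
  forall (p : monomial A B) (i0 : 'I_n),
    ('E_P[shat J (fun i f => (X i f : T -> R)) p]
     = 'E_P[fun w => eval_mono p (fun f => X i0 f w)])%E.
Proof.
move=> n0 d2 HJ Hind Hid Hsq p i0.
exact: main_sec.
Qed.
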